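(* Let $G=(V,E,H)$ be a HEDG and $W,X,Y,Z\subseteq V$ with $(X\cup Y\cup Z)\cap W=\emptyset$. Then $X$ is $\sigma$-separated from $Y$ given $Z$ in $G$ if and only if $X$ is $\sigma$-separated from $Y$ given $Z$ in the marginalization $G^{\mathrm{marg}\setminus W}$.
   Context: HEDG $G=(V,E,H)$: $V$ finite, $E\subseteq V\times V$ (self-loops allowed), $H$ a simplicial complex on $V$ (contains all singletons, closed under subsets); for distinct $v,w$, $v\leftrightarrow w$ means $\{v,w\}\in H$. $\mathrm{Anc}^G(v)$ ($\mathrm{Desc}^G(v)$): nodes with a directed path to (from) $v$, including $v$; $\mathrm{Sc}^G(v)=\mathrm{Anc}^G(v)\cap\mathrm{Desc}^G(v)$. Marginalization $G^{\mathrm{marg}\setminus W}=(V\setminus W,E',H')$: $v_1\to v_2\in E'$ iff $G$ has a directed path $v_1\to u_1\to\cdots\to u_r\to v_2$ with $r\ge0$, all $u_i\in W$; $F'\subseteq V\setminus W$ is in $H'$ iff there is $F\in H$ with $F\subseteq F'\cup W$ such that each $v\in F'$ either lies in $F\setminus W$ or there is a directed path $u_1\to\cdots\to u_r\to v$, $r\ge1$, all $u_i\in W$, $u_1\in F\cap W$. A path is a node sequence $v_1,\dots,v_n$ ($n\ge1$, repetitions allowed) with consecutive nodes joined by $\to$, $\leftarrow$ or $\leftrightarrow$. It is $Z$-$\sigma$-blocked if (a) $v_1\in Z$ or $v_n\in Z$; or (b) some intermediate $v_i$ is a collider (both adjacent edges have an arrowhead at $v_i$) with $v_i\notin\mathrm{Anc}^G(Z)$;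 or (c) some intermediate non-collider $v_i\in Z$ has, on the path, an outgoing directed edge $v_i\to v_{i+1}$ with $v_{i+1}\notin\mathrm{Sc}^G(v_i)$ or $v_{i-1}\leftarrow v_i$ with $v_{i-1}\notin\mathrm{Sc}^G(v_i)$. $X$ is $\sigma$-separated from $Y$ given $Z$ if every path with one endnode in $X$ and the other in $Y$ is $Z$-$\sigma$-blocked. *)

(* Defs.v *)
From mathcomp Require Import all_boot.
Set Implicit Arguments. Unset Strict Implicit. Unset Printing Implicit Defensive.

(* A HEDG over a finite ambient type T: node set [nodes] (V),
   directed edges [edge] (E, self-loops allowed), hyperedges [hyp] (H). *)
Record hedg (T : finType) := Hedg {
  nodes : {set T};
  edge  : rel T;
  hyp   : {set {set T}} }.

Section HEDG.
Variable T : finType.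
Implicit Types (G : hedg T) (W X Y Z : {set T}).

Definition hedg_wf G :=
  [/\ (forall a b, edge G a b -> (a \in nodes G) && (b \in nodes G)),
      (forall F : {set T}, F \in hyp G -> F \subset nodes G),
      (forall v, v \in nodes G -> [set v] \in hyp G) &
      (forall F F' : {set T}, F \in hyp G -> F' \subset F -> F' \in hyp G)].

Definition eN G : rel T := fun a b => [&& a \in nodes G, b \in nodes G & edge G a b].

Definition Anc G (v : T) : {set T} := [set u | connect (eN G) u v].
Definition Desc G (v : T) : {set T} := [set u | connect (eN G) v u].
Definition Sc G (v : T) : {set T} := Anc G v :&: Desc G v.
Definition AncS G Z : {set T} := \bigcup_(z in Z) Anc G z.

Definition eW G W : rel T := fun a b => [&& a \in W, b \in W & edge G a b].

Definition Wreach G W (u v : T) : bool :=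
  (u \in W) && [exists ur, [&& ur \in W, connect (eW G W) u ur & edge G ur v]].

Definition marg G W : hedg T :=
  let N' := nodes G :\: W in
  @Hedg T N'
    (fun a b => [&& a \in N', b \in N' &
                 edge G a b || [exists u1, Wreach G W u1 b && edge G a u1]])
    [set F' : {set T} | (F' \subset N') &&
       [exists F in hyp G, (F \subset F' :|: W) &&
          [forall v in F', (v \in F :\: W) ||
                           [exists u1 in F :&: W, Wreach G W u1 v]]]].

(* Paths: a start node and a list of steps (edge kind, next node). *)
Inductive ekind := Fwd (* v_i -> v_{i+1} *) | Bwd (* v_i <- v_{i+1} *) | Bi .

Definition step_ok G (a : T) (k : ekind) (b : T) : bool :=
  [&& a \in nodes G, b \in nodes G &
      match k with
      | Fwd => edge G a b
      | Bwd => edge G b a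
      | Bi => (a != b) && ([set a; b] \in hyp G)
      end].

Fixpoint walk_ok G (a : T) (s : seq (ekind * T)) : bool :=
  match s with
  | [::] => a \in nodes G
  | (k, b) :: s' => step_ok G a k b && walk_ok G b s'
  end.

Definition head_at_next (k : ekind) : bool := if k is Bwd then false else true.
Definition head_at_prev (k : ekind) : bool := if k is Fwd then false else true.

Definition pnode (v0 : T) (s : seq (ekind * T)) (i : nat) : T := nth v0 (v0 :: map snd s) i.
Definition pkind (s : seq (ekind * T)) (j : nat) : ekind := nth Fwd (map fst s) j.
Definition plast (v0 : T) (s : seq (ekind * T)) : T := last v0 (map snd s).

(* intermediate node i (0 < i < size s) is a collider *)
Definition collider (s : seq (ekind * T)) (i : nat) : bool :=
  head_at_next (pkind s i.-1) && head_at_prev (pkind s i).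

Definition sigma_blocked G Z (v0 : T) (s : seq (ekind * T)) : bool :=
  [|| v0 \in Z, plast v0 s \in Z |
   [exists i : 'I_(size s), (0 < i) &&
      ((collider s i && (pnode v0 s i \notin AncS G Z)) ||
       [&& ~~ collider s i, pnode v0 s i \in Z &
           ((if pkind s i is Fwd then true else false) &&
              (pnode v0 s i.+1 \notin Sc G (pnode v0 s i)))
        || ((if pkind s i.-1 is Bwd then true else false) &&
              (pnode v0 s i.-1 \notin Sc G (pnode v0 s i)))])]].

Definition sigma_sep G X Y Z : Prop :=
  forall (v0 : T) (s : seq (ekind * T)), walk_ok G v0 s ->
    ((v0 \in X) && (plast v0 s \in Y)) || ((v0 \in Y) && (plast v0 s \in X)) ->
    sigma_blocked G Z v0 s.

End HEDG.

(* Main.v *)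
Require Import Defs.
From mathcomp Require Import all_boot.
Set Implicit Arguments. Unset Strict Implicit. Unset Printing Implicit Defensive.


Section Steps.
Variable T : finType.

Record stp := St { sa : T; sk : ekind; sb : T }.

Definition okL (G : hedg T) (t : stp) : bool :=
  if sk t is Fwd then sb t \in Sc G (sa t) else true.
Definition okR (G : hedg T) (t : stp) : bool :=
  if sk t is Bwd then sa t \in Sc G (sb t) else true.
Definition loc (G : hedg T) (Z : {set T}) v (hl okl hr okr : bool) : bool :=
  if hl && hr then v \in AncS G Z else (v \in Z) ==> (okl && okr).
Definition J (G : hedg T) Z : rel stp := fun t1 t2 =>
  loc G Z (sb t1) (head_at_next (sk t1)) (okR G t1) (head_at_prev (sk t2)) (okL G t2).
Definition openfrom G Z a hl okl (ms : seq stp) : bool :=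
  if ms is t :: ms' then loc G Z a hl okl (head_at_prev (sk t)) (okL G t) && path (J G Z) t ms'
  else true.

Lemma openfrom_cons G Z a hl okl t ms :
  openfrom G Z a hl okl (t :: ms) =
  loc G Z a hl okl (head_at_prev (sk t)) (okL G t) &&
  openfrom G Z (sb t) (head_at_next (sk t)) (okR G t) ms.
Proof. by case: ms. Qed.

Fixpoint tosteps (a : T) (s : seq (ekind * T)) : seq stp :=
  match s with [::] => [::] | (k, b) :: s' => St a k b :: tosteps b s' end.
Definition fromsteps (ms : seq stp) : seq (ekind * T) := map (fun t => (sk t, sb t)) ms.
Fixpoint chained (a : T) (ms : seq stp) : bool :=
  match ms with [::] => true | t :: ms' => (sa t == a) && chained (sb t) ms' end.
Definition lastn (a : T) (ms : seq stp) : T := last a (map sb ms).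
Definition stepok G (t : stp) : bool := step_ok G (sa t) (sk t) (sb t).

Lemma tosteps_from a ms : chained a ms -> tosteps a (fromsteps ms) = ms.
Proof.
elim: ms a => [|[a' k b] ms IH] a //= /andP[/eqP -> /IH ->]. by [].
Qed.

Lemma chained_to a s : chained a (tosteps a s).
Proof. by elim: s a => [|[k b] s IH] a //=; rewrite eqxx IH. Qed.

Lemma plastE a s : plast a s = lastn a (tosteps a s).
Proof. by elim: s a => [|[k b] s IH] a //=; have := IH b; rewrite /plast /lastn /=. Qed.

Lemma walk_okE G a s :
  walk_ok G a s = (a \in nodes G) && all (stepok G) (tosteps a s).
Proof.
elim: s a => [|[k b] s IH] a /=; first by rewrite andbT.
rewrite IH /stepok /step_ok /=.
by case: (a \in nodes G); case: (b \in nodes G).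
Qed.

Lemma nth_tosteps d a s j : j < size s ->
  nth d (tosteps a s) j = St (pnode a s j) (pkind s j) (pnode a s j.+1).
Proof.
elim: s a j => [|[k b] s IH] a j //= Hj.
case: j Hj => [|j] Hj //=.
rewrite IH //. rewrite /pnode /=.
congr St.
  by apply: set_nth_default; rewrite /= size_map ltnS ltnW.
by apply: set_nth_default; rewrite /= size_map.
Qed.

Lemma size_tosteps a s : size (tosteps a s) = size s.
Proof. by elim: s a => [|[k b] s IH] a //=; rewrite IH. Qed.

Lemma condJ G Z v0 s j :
  ((collider s j.+1 && (pnode v0 s j.+1 \notin AncS G Z)) ||
      [&& ~~ collider s j.+1, pnode v0 s j.+1 \in Z &
           ((if pkind s j.+1 is Fwd then true else false) &&
              (pnode v0 s j.+2 \notin Sc G (pnode v0 s j.+1)))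
        || ((if pkind s j.+1.-1 is Bwd then true else false) &&
              (pnode v0 s j.+1.-1 \notin Sc G (pnode v0 s j.+1)))])
  = ~~ J G Z (St (pnode v0 s j) (pkind s j) (pnode v0 s j.+1))
             (St (pnode v0 s j.+1) (pkind s j.+1) (pnode v0 s j.+2)).
Proof.
rewrite /J /loc /okL /okR /collider /=.
move: (pnode v0 s j) (pnode v0 s j.+1) (pnode v0 s j.+2) => x y z.
case: (pkind s j); case: (pkind s j.+1) => /=;
case: (y \in AncS G Z); case: (y \in Z); case: (x \in Sc G y); case: (z \in Sc G y) => //.
Qed.

Lemma blockedE G Z v0 s :
  sigma_blocked G Z v0 s =
  ~~ [&& v0 \notin Z, plast v0 s \notin Z & openfrom G Z v0 false true (tosteps v0 s)].
Proof.
rewrite /sigma_blocked.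
case Hv0: (v0 \in Z) => //=; case: (plast v0 s \in Z) => //=.
case Es: s => [|[k b] s'].
  by apply/negbTE/existsP => -[[i Hi]].
rewrite -Es /openfrom /loc Hv0 /=.
have Hts : tosteps v0 s = St v0 k b :: tosteps b s' by rewrite Es.
have Hsz : size (tosteps b s') = (size s).-1 by rewrite size_tosteps Es.
rewrite Hts /=.
set d := St v0 k b.
have Hn1 : forall j, nth d (d :: tosteps b s') j = nth d (tosteps v0 s) j by rewrite Es.
have Hn2 : forall j, nth d (tosteps b s') j = nth d (tosteps v0 s) j.+1 by rewrite Es.
apply/idP/idP.
- case/existsP => -[i Hi] /= /andP[Hi0 Hc]; apply/negP => /(pathP d) Hp.
  case: i Hi Hi0 Hc => [|j] Hi // _.
  have Hj : j < size (tosteps b s') by rewrite Hsz -ltnS (ltn_predK Hi).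
  move: (Hp j Hj).
  rewrite Hn1 Hn2 !nth_tosteps //; last by rewrite ltnW.
  by move=> HJ; rewrite condJ HJ.
- move/(pathP d)=> Hn; apply/existsP.
  have [j Hj Hb] : exists2 j, j < size (tosteps b s') &
      ~~ J G Z (nth d (d :: tosteps b s') j) (nth d (tosteps b s') j).
    case: (boolP [exists j : 'I_(size (tosteps b s')), ~~ J G Z (nth d (d :: tosteps b s') j) (nth d (tosteps b s') j)]).
      by case/existsP => -[j Hj] /= H; exists j.
    move=> /existsPn H; exfalso; apply: Hn => j Hj.
    by have := H (Ordinal Hj); rewrite negbK.
  have Hj1 : j.+1 < size s.
    by move: Hj; rewrite Hsz Es.
  exists (Ordinal Hj1) => /=.
  move: Hb; rewrite Hn1 Hn2 !nth_tosteps //; last by rewrite ltnW.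
  by rewrite -condJ.
Qed.

End Steps.


Section Graph.
Variable T : finType.
Variable G : hedg T.
Variables W Z : {set T}.
Hypothesis wfG : hedg_wf G.
Hypothesis WN : W \subset nodes G.
Hypothesis ZW : forall z, z \in Z -> z \notin W.

Local Notation M := (marg G W).

Definition cov (F : {set T}) x :=
  (x \in F :\: W) || [exists u1 in F :&: W, Wreach G W u1 x].

Lemma edge_nodes a b : edge G a b -> (a \in nodes G) && (b \in nodes G).
Proof. by case: wfG => H _ _ _; apply: H. Qed.

Lemma eN_edge a b : eN G a b = edge G a b.
Proof.
rewrite /eN; case E: (edge G a b); last by rewrite !andbF.
by move/edge_nodes: E => /andP[-> ->].
Qed.

Lemma eW_edge a b : eW G W a b -> edge G a b.
Proof. by case/and3P. Qed.

Lemma connect_eW_W u s : u \in W -> connect (eW G W) u s -> s \in W.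
Proof.
move=> Hu /connectP[p Hp ->]; elim: p u Hu Hp => [|y p IH] u Hu //= /andP[/and3P[_ Hy _] Hp].
exact: IH Hp.
Qed.

Lemma connect_eW_G u s : connect (eW G W) u s -> connect (eN G) u s.
Proof.
apply: connect_sub => x y /eW_edge H; apply: connect1; by rewrite eN_edge.
Qed.

Lemma Wreach_edge u v : u \in W -> edge G u v -> Wreach G W u v.
Proof. by move=> Hu He; rewrite /Wreach Hu; apply/existsP; exists u; rewrite Hu connect0 He. Qed.

Lemma WreachP u v : reflect (exists ur, [/\ u \in W, ur \in W, connect (eW G W) u ur & edge G ur v])
  (Wreach G W u v).
Proof.
apply: (iffP andP) => [[Hu /existsP[ur /and3P[H1 H2 H3]]]|[ur [H1 H2 H3 H4]]].
  by exists ur.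
by split => //; apply/existsP; exists ur; rewrite H2 H3 H4.
Qed.

Lemma Wreach_W u v : Wreach G W u v -> u \in W.
Proof. by case/WreachP => ur []. Qed.

Lemma Wreach_ext u v n : Wreach G W u v -> v \in W -> edge G v n -> Wreach G W u n.
Proof.
case/WreachP => ur [Hu Hur Hc He] Hv Hvn; apply/WreachP; exists v; split => //.
apply: connect_trans Hc _; apply: connect1; by rewrite /eW Hur Hv He.
Qed.

Lemma Wreach_pre u v n : u \in W -> connect (eW G W) u v -> Wreach G W v n -> Wreach G W u n.
Proof.
move=> Hu Huv /WreachP[ur [Hv Hur Hc He]]; apply/WreachP; exists ur; split => //.
exact: connect_trans Huv Hc.
Qed.

Lemma Wreach_trans u v d : Wreach G W u v -> Wreach G W v d -> Wreach G W u d.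
Proof.
move=> H1 H2; have Hv := Wreach_W H2.
case/WreachP: H1 => ur [Hu Hur Hc He].
apply: (Wreach_pre Hu _ H2); apply: connect_trans Hc _; apply: connect1; by rewrite /eW Hur Hv He.
Qed.

Lemma Wreach_conn u v : Wreach G W u v -> connect (eN G) u v.
Proof.
case/WreachP => ur [_ _ Hc He]; apply: connect_trans (connect_eW_G Hc) _.
by apply: connect1; rewrite eN_edge.
Qed.

Lemma medgeP a b : reflect
  [/\ a \in nodes G :\: W, b \in nodes G :\: W &
     (edge G a b \/ exists u1, edge G a u1 /\ Wreach G W u1 b)]
  (edge M a b).
Proof.
rewrite /marg /=; apply: (iffP and3P) => [[H1 H2 /orP[H3|/existsP[u1 /andP[H4 H5]]]]|[H1 H2 [H3|[u1 [H4 H5]]]]].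
- by split => //; left.
- by split => //; right; exists u1.
- by rewrite H1 H2 H3.
- by rewrite H1 H2; split => //; apply/orP; right; apply/existsP; exists u1; rewrite H4 H5.
Qed.

Lemma eN_marg a b : eN M a b = edge M a b.
Proof.
rewrite /eN; case E: (edge M a b); last by rewrite !andbF.
by case/medgeP: E => -> -> _.
Qed.

Lemma marg_edge_conn a b : edge M a b -> connect (eN G) a b.
Proof.
case/medgeP => _ _ [H|[u1 [H1 H2]]]; first by apply: connect1; rewrite eN_edge.
apply: connect_trans (Wreach_conn H2); apply: connect1; by rewrite eN_edge.
Qed.

Definition Stc a s :=
  (s \notin W /\ connect (eN M) a s) \/
  (exists u' u1, [/\ u' \in nodes G :\: W, connect (eN M) a u', u1 \in W,
                     edge G u' u1 & connect (eW G W) u1 s]).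

Lemma Stc_step a s y : Stc a s -> edge G s y -> Stc a y.
Proof.
move=> Hs Hsy; have /andP[Hsn Hyn] := edge_nodes Hsy.
case: Hs => [[HsW Has]|[u' [u1 [Hu' Hau' Hu1 He Hc]]]].
- case HyW: (y \in W).
    right; exists s, y; split; [by rewrite !inE HsW Hsn|by []|by []|by []|exact: connect0].
  left; split; first by rewrite HyW.
  apply: connect_trans Has _; apply: connect1; rewrite eN_marg.
  by apply/medgeP; rewrite !inE HyW HsW Hsn Hyn; split => //; left.
- have HsW := connect_eW_W Hu1 Hc.
  case HyW: (y \in W).
    right; exists u', u1; split => //.
    by apply: connect_trans Hc _; apply: connect1; rewrite /eW HsW HyW.
  left; split; first by rewrite HyW.
  apply: connect_trans Hau' _; apply: connect1; rewrite eN_marg.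
  apply/medgeP; split; [exact: Hu'|by rewrite !inE HyW Hyn|right; exists u1; split => //].
  by apply/WreachP; exists s.
Qed.

Lemma connect_marg a b : a \notin W -> b \notin W ->
  connect (eN M) a b = connect (eN G) a b.
Proof.
move=> Ha Hb; apply/idP/idP.
  apply: connect_sub => x y; rewrite eN_marg; exact: marg_edge_conn.
case/connectP => p Hp Eb; subst b.
have H : forall p s, path (eN G) s p -> Stc a s -> Stc a (last s p).
  elim => [|y q IH] s //= /andP[Hsy Hq] Hs.
  apply: IH Hq _; apply: Stc_step Hs _; by rewrite -eN_edge.
have := H p a Hp (or_introl (conj Ha (connect0 _ _))).
case => [[_ //]|[u' [u1 [_ _ Hu1 _ Hc]]]].
by rewrite (connect_eW_W Hu1 Hc) in Hb.
Qed.

Lemma Anc_marg a b : a \notin W -> b \notin W -> (a \in Anc M b) = (a \in Anc G b).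
Proof. by move=> Ha Hb; rewrite !inE connect_marg. Qed.

Lemma Sc_marg a b : a \notin W -> b \notin W -> (a \in Sc M b) = (a \in Sc G b).
Proof. by move=> Ha Hb; rewrite /Sc !inE !connect_marg. Qed.

Lemma AncSP H v : reflect (exists2 z, z \in Z & connect (eN H) v z) (v \in AncS H Z).
Proof.
apply: (iffP bigcupP) => [[z Hz]|[z Hz Hc]]; first by rewrite inE => ?; exists z.
by exists z; rewrite // inE.
Qed.

Lemma AncS_marg v : v \notin W -> (v \in AncS M Z) = (v \in AncS G Z).
Proof.
move=> Hv; apply/AncSP/AncSP => -[z Hz Hc]; exists z => //.
  by rewrite -connect_marg // ZW.
by rewrite connect_marg // ZW.
Qed.

Lemma AncS_conn v t : connect (eN G) v t -> t \in AncS G Z -> v \in AncS G Z.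
Proof.
move=> H1 /AncSP[z Hz H2]; apply/AncSP; exists z => //; exact: connect_trans H1 H2.
Qed.

Lemma exitW v t : v \in W -> connect (eN G) v t -> t \notin W ->
  exists d, [/\ d \in nodes G :\: W, Wreach G W v d & connect (eN G) d t].
Proof.
move=> Hv /connectP[p Hp ->] Ht.
have H : forall p s, s \in W -> connect (eW G W) v s -> path (eN G) s p -> last s p \notin W ->
  exists d, [/\ d \in nodes G :\: W, Wreach G W v d & connect (eN G) d (last s p)].
  elim => [|y q IH] s Hs Hvs /=; first by rewrite Hs.
  move=> /andP[Hsy Hq] Hl.
  have Hy : y \in nodes G by move: Hsy; rewrite eN_edge => /edge_nodes /andP[].
  case HyW: (y \in W).
    apply: IH Hq Hl => //; apply: connect_trans Hvs _; apply: connect1.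
    by rewrite /eW Hs HyW -eN_edge.
  exists y; split; first by rewrite !inE HyW.
    by apply/WreachP; exists s; split => //; rewrite -eN_edge.
  by apply/connectP; exists q.
exact: H Hv (connect0 _ _) Hp Ht.
Qed.

Lemma exitAncS v : v \in W -> v \in AncS G Z ->
  exists d, [/\ d \in nodes G :\: W, Wreach G W v d & d \in AncS G Z].
Proof.
move=> Hv /AncSP[z Hz Hc]; have [d [H1 H2 H3]] := exitW Hv Hc (ZW Hz).
by exists d; split => //; apply/AncSP; exists z.
Qed.

End Graph.


Section Marg.
Variable T : finType.
Variable G : hedg T.
Variables W Z : {set T}.
Hypothesis wfG : hedg_wf G.
Hypothesis WN : W \subset nodes G.
Hypothesis ZW : forall z, z \in Z -> z \notin W.

Local Notation M := (marg G W).
Local Notation N' := (nodes G :\: W).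

Lemma hypm_pair a b F : a \in N' -> b \in N' -> F \in hyp G ->
  F \subset [set a; b] :|: W -> cov G W F a -> cov G W F b -> [set a; b] \in hyp M.
Proof.
move=> Ha Hb HF HFs Ca Cb; rewrite /marg /= inE; apply/andP; split.
  by apply/subsetP => x; rewrite !inE => /orP[/eqP->|/eqP->]; move: Ha Hb; rewrite !inE.
apply/existsP; exists F; rewrite HF HFs /=; apply/forallP => x; apply/implyP.
by move=> /set2P[->|->].
Qed.

Lemma hypmP a b : [set a; b] \in hyp M ->
  exists F, [/\ F \in hyp G, F \subset [set a; b] :|: W, cov G W F a & cov G W F b].
Proof.
rewrite /marg /= inE => /andP[_ /existsP[F /and3P[HF HFs /forallP Hall]]].
exists F; split => //.
  exact: (implyP (Hall a) (set21 a b)).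
exact: (implyP (Hall b) (set22 a b)).
Qed.

Lemma nodes_marg : nodes M = N'.
Proof. by []. Qed.

Lemma stepm_Fwd a b : step_ok M a Fwd b = edge M a b.
Proof.
rewrite /step_ok; case E: (edge M a b); last by rewrite !andbF.
by case/medgeP: E => Ha Hb _; rewrite nodes_marg Ha Hb.
Qed.

Lemma stepm_Bwd a b : step_ok M a Bwd b = edge M b a.
Proof.
rewrite /step_ok; case E: (edge M b a); last by rewrite !andbF.
by case/medgeP: E => Ha Hb _; rewrite nodes_marg Ha Hb.
Qed.

Lemma stepm_Bi a b : a \in N' -> b \in N' -> a != b ->
  [set a; b] \in hyp M -> step_ok M a Bi b.
Proof. by move=> Ha Hb Hab Hh; rewrite /step_ok nodes_marg Ha Hb Hab Hh. Qed.

Lemma medge_direct a b : a \in N' -> b \in N' -> edge G a b -> edge M a b.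
Proof. by move=> Ha Hb He; apply/medgeP; split => //; left. Qed.

Lemma medge_via a b u1 : a \in N' -> b \in N' -> edge G a u1 -> Wreach G W u1 b -> edge M a b.
Proof. by move=> Ha Hb He Hw; apply/medgeP; split => //; right; exists u1. Qed.

Lemma cov_notW (F : {set T}) x : x \notin W -> x \in F -> cov G W F x.
Proof. by move=> Hx HF; rewrite /cov !inE Hx HF. Qed.

Lemma cov_via (F : {set T}) u x : u \in F -> Wreach G W u x -> cov G W F x.
Proof.
move=> Hu Hw; rewrite /cov; apply/orP; right; apply/existsP; exists u.
by rewrite !inE Hu (Wreach_W Hw).
Qed.

Lemma covP (F : {set T}) x : cov G W F x -> (x \in F /\ x \notin W) \/ exists2 u, u \in F :&: W & Wreach G W u x.
Proof.
rewrite /cov => /orP[|/existsP[u /andP[H1 H2]]]; last by right; exists u.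
by rewrite !inE => /andP[-> ->]; left.
Qed.

End Marg.


Lemma path_openfrom (T : finType) (G : hedg T) (Z : {set T}) t ms :
  path (J G Z) t ms = openfrom G Z (sb t) (head_at_next (sk t)) (okR G t) ms.
Proof. by case: ms. Qed.

Lemma openfrom_weak (T : finType) (G : hedg T) (Z : {set T}) v hl okl ms :
  v \notin Z -> openfrom G Z v hl okl ms -> openfrom G Z v false true ms.
Proof. by move=> Hv; case: ms => //= t ms /andP[_ ->]; rewrite /loc /= (negbTE Hv). Qed.

Lemma openfrom_coll (T : finType) (G : hedg T) (Z : {set T}) v f r :
  openfrom G Z v true true (f :: r) -> head_at_prev (sk f) -> v \in AncS G Z.
Proof. by rewrite /= /loc /= => /andP[H _] Hh; move: H; rewrite Hh. Qed.

Lemma ScE (T : finType) (H : hedg T) a b :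
  (a \in Sc H b) = connect (eN H) a b && connect (eN H) b a.
Proof. by rewrite /Sc !inE. Qed.

Section Dir2.
Variable T : finType.
Variable G : hedg T.
Variables W Z : {set T}.
Hypothesis wfG : hedg_wf G.
Hypothesis WN : W \subset nodes G.
Hypothesis ZW : forall z, z \in Z -> z \notin W.
Variable y : T.
Hypothesis yW : y \notin W.
Hypothesis yZ : y \notin Z.

Local Notation M := (marg G W).
Local Notation N' := (nodes G :\: W).

Definition Gr v rest := [&& chained v rest, all (stepok G) rest & lastn v rest == y].
Definition Out a (hl okl : bool) := exists ms,
  [/\ chained a ms, all (stepok M) ms, lastn a ms = y & openfrom M Z a hl okl ms].

Lemma Gr_cons v f r : Gr v (f :: r) -> [/\ sa f = v, stepok G f & Gr (sb f) r].
Proof.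
by rewrite /Gr /= => /and3P[/andP[/eqP -> ->] /andP[-> ->] ->].
Qed.

Lemma Gr_nil v : Gr v [::] -> v = y.
Proof. by rewrite /Gr /= => /eqP. Qed.

Lemma Out_cons t a (hl okl : bool) : sa t = a -> stepok M t ->
  loc M Z a hl okl (head_at_prev (sk t)) (okL M t) ->
  Out (sb t) (head_at_next (sk t)) (okR M t) -> Out a hl okl.
Proof.
move=> Ht Hs Hl [ms [H1 H2 H3 H4]]; exists (t :: ms); split.
- by rewrite /= Ht eqxx H1.
- by rewrite /= Hs H2.
- by rewrite /lastn /=; apply: H3.
- by rewrite openfrom_cons Hl H4.
Qed.

Lemma loc_hh a (hl okl : bool) : a \notin W -> (hl -> a \in AncS G Z) -> (a \in Z -> okl) ->
  loc M Z a hl okl true true.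
Proof.
move=> Ha H1 H2; rewrite /loc andbT; case: hl H1 => H1.
  by rewrite AncS_marg //; apply: H1.
by rewrite andbT; apply/implyP => /H2.
Qed.

Lemma inN' x : x \in N' -> x \notin W.
Proof. by rewrite inE => /andP[]. Qed.

Lemma WnZ x : x \in W -> x \notin Z.
Proof. by move=> Hx; apply/negP => /ZW; rewrite Hx. Qed.

Lemma Wnodes x : x \in W -> x \in nodes G.
Proof. by move=> Hx; apply: (subsetP WN). Qed.

Lemma set1_hyp v : v \in nodes G -> [set v] \in hyp G.
Proof. by case: wfG => _ _ H _; apply: H. Qed.

Lemma hyp_sub (F F' : {set T}) : F \in hyp G -> F' \subset F -> F' \in hyp G.
Proof. by case: wfG => _ _ _ H; apply: H. Qed.

Definition AnchorC r := forall a (hl okl gh gok : bool), a \in N' -> Gr a r ->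
  openfrom G Z a gh gok r -> (hl -> (a \in AncS G Z) || gh) -> (a \in Z -> gok -> okl) ->
  (gh -> gok) -> Out a hl okl.
Definition DC r := forall a u1 v (hl okl : bool), a \in N' -> a \notin Z -> u1 \in W -> edge G a u1 ->
  connect (eW G W) u1 v -> v \in W -> Gr v r -> openfrom G Z v true true r -> Out a hl okl.
Definition UC r := forall a v (hl okl : bool), a \in N' -> v \in W -> Wreach G W v a -> Gr v r ->
  openfrom G Z v false true r -> (hl -> a \in AncS G Z) -> (a \in Z -> okl) -> Out a hl okl.
Definition SC r := forall a v F (hl okl : bool), a \in N' -> v \in W -> F \in hyp G -> F \subset a |: W ->
  cov G W F a -> (v \in F \/ exists2 u, u \in F :&: W & Wreach G W u v) -> Gr v r ->
  openfrom G Z v true true r -> (hl -> a \in AncS G Z) -> (a \in Z -> okl) -> Out a hl okl.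

Lemma S_end r a n F (hl okl : bool) : AnchorC r -> a \in N' -> n \in N' -> F \in hyp G ->
  F \subset [set a; n] :|: W -> cov G W F a -> cov G W F n -> Gr n r ->
  openfrom G Z n true true r -> (hl -> a \in AncS G Z) -> (a \in Z -> okl) -> Out a hl okl.
Proof.
move=> IHA Ha Hn HF HFs Ca Cn Hr Ho Hhl Hokl.
case: (eqVneq a n) => [Ean|Han].
  subst n; apply: (IHA _ _ _ true true) => //; first by move=> _; rewrite orbT.
  by move=> /Hokl.
apply: (@Out_cons (St a Bi n)) => //=.
- by apply: stepm_Bi => //; apply: hypm_pair HF HFs Ca Cn.
- by apply: loc_hh => //; apply: inN'.
- apply: (IHA _ _ _ true true) => //; by move=> _; rewrite orbT.
Qed.

Lemma AncSm v : v \notin W -> (v \in AncS M Z) = (v \in AncS G Z).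
Proof. by move=> Hv; apply: AncS_marg. Qed.
Lemma Scm a b : a \notin W -> b \notin W -> (a \in Sc M b) = (a \in Sc G b).
Proof. by move=> Ha Hb; apply: Sc_marg. Qed.
Lemma WreachC u v : Wreach G W u v -> connect (eN G) u v.
Proof. move=> H; exact: (Wreach_conn wfG H). Qed.
Lemma exitW' v t : v \in W -> connect (eN G) v t -> t \notin W ->
  exists d, [/\ d \in N', Wreach G W v d & connect (eN G) d t].
Proof. by move=> H1 H2 H3; apply: exitW. Qed.
Lemma exitAncS' v : v \in W -> v \in AncS G Z ->
  exists d, [/\ d \in N', Wreach G W v d & d \in AncS G Z].
Proof. by move=> H1 H2; apply: exitAncS. Qed.
Lemma AncS_self z : z \in Z -> z \in AncS G Z.
Proof. by move=> Hz; apply/AncSP; exists z => //; apply: connect0. Qed.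

Lemma U_step f r : AnchorC r -> UC r -> SC r -> UC (f :: r).
Proof.
move=> IHA IHU IHS a v hl okl Ha Hv Hva /Gr_cons[Hfa Hf Hr] Hop Hhl Hokl.
case: f Hfa Hf Hr Hop => v' k n /= Ev; subst v'.
move=> Hf Hr /andP[_]; rewrite path_openfrom /= => Hn.
move: Hf; rewrite /stepok /step_ok /= => /and3P[Hvn Hnn Hk].
case HnW: (n \in W).
  case: k Hk Hn => Hk Hn.
  - apply: (IHS a n [set v] hl okl Ha HnW (set1_hyp Hvn) _ (cov_via (set11 v) Hva) _ Hr Hn Hhl Hokl).
      by apply/subsetP => x; rewrite inE => /eqP->; rewrite !inE Hv orbT.
    by right; exists v; [rewrite !inE eqxx Hv | exact: Wreach_edge Hv Hk].
  - exact: (IHU a n hl okl Ha HnW (Wreach_trans (Wreach_edge HnW Hk) Hva) Hr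
             (openfrom_weak (WnZ HnW) Hn) Hhl Hokl).
  - case/andP: Hk => Hvn' Hh.
    apply: (IHS a n [set v; n] hl okl Ha HnW Hh _ (cov_via (set21 v n) Hva) (or_introl (set22 v n)) Hr Hn Hhl Hokl).
    by apply/subsetP => x /set2P[->|->]; rewrite !inE ?Hv ?HnW orbT.
have HnN : n \in N' by rewrite !inE HnW Hnn.
case: k Hk Hn => Hk Hn.
- apply: (S_end IHA Ha HnN (set1_hyp Hvn) _ (cov_via (set11 v) Hva)
           (cov_via (set11 v) (Wreach_edge Hv Hk)) Hr Hn Hhl Hokl).
  by apply/subsetP => x; rewrite inE => /eqP->; rewrite !inE Hv !orbT.
- case HnZ: (n \in Z); last first.
    apply: (@Out_cons (St a Bwd n)) => //=.
    + by rewrite /stepok /= stepm_Bwd; exact: medge_via HnN Ha Hk Hva.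
    + exact: loc_hh (inN' Ha) Hhl Hokl.
    + apply: (IHA n false _ false (okR G (St v Bwd n))) => //.
      by rewrite HnZ.
  have HSc : v \in Sc G n.
    case Er: r Hr Hn => [|f' r'] Hr' Hn'.
      by move: yZ; rewrite -(Gr_nil Hr') HnZ.
    by move: Hn'; rewrite /= /loc /= HnZ /= => /andP[/andP[H _] _].
  move: HSc; rewrite ScE => /andP[Hc _].
  have [c [HcN Hvc Hcn]] := exitW' Hv Hc (negbT HnW).
  have Hc_out : forall (hl' okl' : bool), (hl' -> c \in AncS G Z) -> (c \in Z -> okl') -> Out c hl' okl'.
    move=> hl' okl' H1 H2; apply: (@Out_cons (St c Bwd n)) => //=.
    + by rewrite /stepok /= stepm_Bwd; exact: medge_via HnN HcN Hk Hvc.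
    + exact: loc_hh (inN' HcN) H1 H2.
    + apply: (IHA n false _ false (okR G (St v Bwd n))) => // _ _.
      rewrite /okR /= Scm ?inN' // ScE Hcn /=.
      by apply: connect_trans (WreachC Hvc); apply: connect1; rewrite eN_edge.
  case: (eqVneq a c) => [Eac|Hac].
    by subst c; apply: Hc_out.
  apply: (@Out_cons (St a Bi c)) => //=.
  + apply: stepm_Bi => //.
    apply: hypm_pair Ha HcN (set1_hyp (Wnodes Hv)) _ (cov_via (set11 v) Hva) (cov_via (set11 v) Hvc).
    by apply/subsetP => x; rewrite inE => /eqP->; rewrite !inE Hv !orbT.
  + exact: loc_hh (inN' Ha) Hhl Hokl.
  + apply: Hc_out => // _; apply: AncS_conn Hcn _; exact: AncS_self.
- case/andP: Hk => Hvn' Hh.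
  apply: (S_end IHA Ha HnN Hh _ (cov_via (set21 v n) Hva)) => //.
    by apply/subsetP => x /set2P[->|->]; rewrite !inE ?Hv ?eqxx !orbT.
  by rewrite /cov !inE HnW eqxx orbT.
Qed.

Lemma S_step f r : AnchorC r -> UC (f :: r) -> SC r -> SC (f :: r).
Proof.
move=> IHA IHU1 IHS a v F hl okl Ha Hv HF HFs Ca Cv HGr Hop Hhl Hokl.
have HGr' := HGr; have Hop' := Hop.
move/Gr_cons: HGr => [Hfa Hf Hr].
have Hdet : head_at_prev (sk f) -> Out a hl okl.
  move=> Hh; have HvA := openfrom_coll Hop Hh.
  have [d [HdN Hvd HdA]] := exitAncS' Hv HvA.
  have Cd : cov G W F d.
    case: Cv => [HvF|[u Hu Huv]]; first exact: (cov_via HvF Hvd).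
    by case/setIP: Hu => Hu _; apply: (cov_via Hu); apply: Wreach_trans Huv Hvd.
  case: (eqVneq a d) => [Ead|Had].
    by subst d; apply: (IHU1 a v hl okl Ha Hv Hvd HGr' (openfrom_weak (WnZ Hv) Hop') Hhl Hokl).
  apply: (@Out_cons (St a Bi d)) => //=.
  + apply: stepm_Bi => //; apply: hypm_pair Ha HdN HF _ Ca Cd.
    apply: subset_trans HFs _; apply/subsetP => x; rewrite !inE => /orP[->|->]; by rewrite ?orbT.
  + exact: loc_hh (inN' Ha) Hhl Hokl.
  + by apply: (IHU1 d v true true HdN Hv Hvd HGr' (openfrom_weak (WnZ Hv) Hop')).
clear IHU1 HGr' Hop'.
case: f Hfa Hf Hr Hop Hdet => v' k n /= Ev; subst v'.
move=> Hf Hr /andP[_]; rewrite path_openfrom /= => Hn Hdet.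
case: k Hf Hn Hdet => Hf Hn Hdet; try by apply: Hdet.
move: Hf; rewrite /stepok /step_ok /= => /and3P[Hvn Hnn Hk].
have Cn : exists2 u, u \in F :&: W & Wreach G W u n.
  case: Cv => [HvF|[u Hu Huv]].
    by exists v; [rewrite inE HvF Hv | exact: Wreach_edge Hv Hk].
  by exists u => //; exact: Wreach_ext Huv Hv Hk.
case HnW: (n \in W).
  exact: (IHS a n F hl okl Ha HnW HF HFs Ca (or_intror Cn) Hr Hn Hhl Hokl).
have HnN : n \in N' by rewrite !inE HnW Hnn.
case: Cn => u Hu Hun; case/setIP: Hu => HuF _.
apply: (S_end IHA Ha HnN HF _ Ca (cov_via HuF Hun) Hr Hn Hhl Hokl).
apply: subset_trans HFs _; apply/subsetP => x; rewrite !inE => /orP[->|->]; by rewrite ?orbT.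
Qed.

Lemma D_step f r : AnchorC r -> UC (f :: r) -> DC r -> DC (f :: r).
Proof.
move=> IHA IHU1 IHD a u1 v hl okl Ha HaZ Hu1 Hau1 Hc Hv HGr Hop.
have HGr' := HGr; have Hop' := Hop.
move/Gr_cons: HGr => [Hfa Hf Hr].
have Hloc : forall c, loc M Z a hl okl false c.
  by move=> c; rewrite /loc andbF (negbTE HaZ).
have Hdet : head_at_prev (sk f) -> Out a hl okl.
  move=> Hh; have HvA := openfrom_coll Hop Hh.
  have [d [HdN Hvd HdA]] := exitAncS' Hv HvA.
  apply: (@Out_cons (St a Fwd d)) => //=.
  + rewrite /stepok /= stepm_Fwd; apply: medge_via Ha HdN Hau1 _; exact: Wreach_pre Hu1 Hc Hvd.
  + by apply: (IHU1 d v true true HdN Hv Hvd HGr' (openfrom_weak (WnZ Hv) Hop')).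
clear IHU1 HGr' Hop'.
case: f Hfa Hf Hr Hop Hdet => v' k n /= Ev; subst v'.
move=> Hf Hr /andP[_]; rewrite path_openfrom /= => Hn Hdet.
case: k Hf Hn Hdet => Hf Hn Hdet; try by apply: Hdet.
move: Hf; rewrite /stepok /step_ok /= => /and3P[Hvn Hnn Hk].
case HnW: (n \in W).
  apply: (IHD a u1 n hl okl Ha HaZ Hu1 Hau1 _ HnW Hr Hn).
  by apply: connect_trans Hc (connect1 _); rewrite /eW Hv HnW Hk.
have HnN : n \in N' by rewrite !inE HnW Hnn.
apply: (@Out_cons (St a Fwd n)) => //=.
+ rewrite /stepok /= stepm_Fwd; apply: medge_via Ha HnN Hau1 _.
  by apply/WreachP; exists v.
+ by apply: (IHA n true true true true HnN Hr Hn) => // _; rewrite orbT.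
Qed.

Lemma A_step f r : AnchorC r -> DC r -> UC r -> SC r -> AnchorC (f :: r).
Proof.
move=> IHA IHD IHU IHS a hl okl gh gok Ha /Gr_cons[Hfa Hf Hr] Hop Hi1 Hi2 Hi3.
case: f Hfa Hf Hr Hop => a' k n /= Ea; subst a'.
move=> Hf Hr /andP[Hloc]; rewrite path_openfrom /= => Hn.
move: Hf; rewrite /stepok /step_ok /= => /and3P[Han Hnn Hk].
have HaW := inN' Ha.
have HM : a \in Z -> okl.
  move=> HaZ; move: Hloc; rewrite /loc; case: ifP => [/andP[Hgh _] _|_ /implyP/(_ HaZ)/andP[Hg _]].
    exact: Hi2 HaZ (Hi3 Hgh).
  exact: Hi2 HaZ Hg.
have HC : head_at_prev k -> hl -> a \in AncS G Z.
  move=> Hh /Hi1 /orP[//|Hgh]; move: Hloc; by rewrite /loc Hgh Hh.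
have HFw : k = Fwd -> a \in Z -> n \in Sc G a.
  by move=> Ek HaZ; move: Hloc; rewrite Ek /loc /= andbF HaZ /= => /andP[_].
clear Hloc.
case HnW: (n \in W); last first.
  have HnN : n \in N' by rewrite !inE HnW Hnn.
  apply: (@Out_cons (St a k n)) => //=.
  + rewrite /stepok /=; case: k Hk {HC HFw Hn} => Hk.
    - by rewrite stepm_Fwd; exact: medge_direct.
    - by rewrite stepm_Bwd; exact: medge_direct.
    - case/andP: Hk => Hne Hh; apply: stepm_Bi => //.
      apply: hypm_pair Ha HnN Hh _ _ _.
      * by apply/subsetP => x Hx; rewrite inE Hx.
      * by rewrite /cov !inE eqxx HaW.
      * by rewrite /cov !inE eqxx HnW orbT.
  + rewrite /loc; case: ifP => [/andP[Hhl Hh]|_].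
      by rewrite AncSm //; exact: HC.
    apply/implyP => HaZ; rewrite HM //=.
    case: k HFw {Hk Hn HC} => HFw //=.
    by rewrite /okL /= Scm ?HnW //; exact: HFw.
  + apply: (IHA n _ _ (head_at_next k) (okR G (St a k n)) HnN Hr Hn) => //.
    - by move=> ->; rewrite orbT.
    - by case: k {Hk Hn HC HFw} => //= _; rewrite /okR /= Scm ?HnW.
    - by case: k {Hk Hn HC HFw}.
case: k Hk Hn HC HFw => Hk Hn HC HFw.
- case HaZ: (a \in Z); last first.
    exact: (IHD a n n hl okl Ha (negbT HaZ) HnW Hk (connect0 _ _) HnW Hr Hn).
  have := HFw erefl HaZ; rewrite ScE => /andP[Hna _].
  have [c [HcN Hnc Hca]] := exitW' HnW Hna HaW.
  apply: (@Out_cons (St a Fwd c)) => //=.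
  + by rewrite /stepok /= stepm_Fwd; exact: medge_via Ha HcN Hk Hnc.
  + rewrite /loc andbF; apply/implyP => _; rewrite HM //= /okL /= Scm ?inN' // ScE Hca /=.
    by apply: connect_trans (connect1 _) (WreachC Hnc); rewrite eN_edge.
  + apply: (IHU c n true true HcN HnW Hnc Hr (openfrom_weak (WnZ HnW) Hn)) => // _.
    exact: AncS_conn Hca (AncS_self HaZ).
- exact: (IHU a n hl okl Ha HnW (Wreach_edge HnW Hk) Hr (openfrom_weak (WnZ HnW) Hn) (HC isT) HM).
- case/andP: Hk => Hne Hh.
  apply: (IHS a n [set a; n] hl okl Ha HnW Hh _ _ (or_introl (set22 a n)) Hr Hn (HC isT) HM).
    by apply/subsetP => x /set2P[->|->]; rewrite !inE ?eqxx ?HnW ?orbT.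
  by rewrite /cov !inE eqxx HaW.
Qed.

Lemma main2 r : [/\ AnchorC r, DC r, UC r & SC r].
Proof.
elim: r => [|f r [IHA IHD IHU IHS]].
  split.
  - move=> a hl okl gh gok Ha /Gr_nil Ea _ _ _ _.
    by exists [::]; split.
  - by move=> a u1 v hl okl _ _ _ _ _ Hv /Gr_nil Ev; move: yW; rewrite -Ev Hv.
  - by move=> a v hl okl _ Hv _ /Gr_nil Ev; move: yW; rewrite -Ev Hv.
  - by move=> a v F hl okl _ Hv _ _ _ _ /Gr_nil Ev; move: yW; rewrite -Ev Hv.
have IHU1 := U_step IHA IHU IHS.
split.
- exact: A_step.
- exact: D_step.
- exact: IHU1.
- exact: S_step.
Qed.

End Dir2.


Section Dir1.
Variable T : finType.
Variable G : hedg T.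
Variables W Z : {set T}.
Hypothesis wfG : hedg_wf G.
Hypothesis WN : W \subset nodes G.
Hypothesis ZW : forall z, z \in Z -> z \notin W.

Local Notation M := (marg G W).
Local Notation N' := (nodes G :\: W).

Definition NC (t1 t2 : stp T) :=
  ~~ (head_at_next (sk t1) && head_at_prev (sk t2)) && (sb t1 \notin Z).

Lemma NC_J (H : hedg T) t1 t2 : NC t1 t2 -> J H Z t1 t2.
Proof. by case/andP => H1 H2; rewrite /J /loc (negbTE H1) (negbTE H2). Qed.

Definition Seg (a b : T) (l : seq (stp T)) :=
  [/\ chained a l, all (stepok G) l, lastn a l = b &
      (if l is t0 :: s then path NC t0 s else true)].

Definition NCj (l1 l2 : seq (stp T)) :=
  if l1 is t1 :: l1' then (if l2 is t2 :: _ then NC (last t1 l1') t2 else true) else true.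

Lemma chained_cat (a : T) l1 l2 : chained a (l1 ++ l2) = chained a l1 && chained (lastn a l1) l2.
Proof. by elim: l1 a => [|t l1 IH] a //=; rewrite IH andbA. Qed.

Lemma lastn_cat (a : T) l1 l2 : lastn a (l1 ++ l2) = lastn (lastn a l1) l2.
Proof. by rewrite /lastn map_cat last_cat. Qed.

Lemma lastn_last (t0 : stp T) s : lastn (sb t0) s = sb (last t0 s).
Proof. by rewrite /lastn last_map. Qed.

Lemma Seg_cat a m b l1 l2 : Seg a m l1 -> Seg m b l2 -> NCj l1 l2 -> Seg a b (l1 ++ l2).
Proof.
move=> [H1 H2 H3 H4] [H5 H6 H7 H8] Hj; split.
- by rewrite chained_cat H1 H3 H5.
- by rewrite all_cat H2 H6.
- by rewrite lastn_cat H3 H7.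
- case: l1 H1 H2 H3 H4 Hj => [|t1 l1'] /= H1 H2 H3 H4 Hj; first by [].
  rewrite cat_path H4 /=; case: l2 H5 H6 H7 H8 Hj => [|t2 l2'] //= _ _ _ -> ->.
  by [].
Qed.

Fixpoint chainK (k : ekind) (u : T) (p : seq T) : seq (stp T) :=
  if p is x :: p' then St u k x :: chainK k x p' else [::].

Lemma chainK_last k t0 u p z :
  last t0 (chainK k u (rcons p z)) = St (last u p) k z.
Proof. by elim: p t0 u => [|x p IH] t0 u //=. Qed.

Lemma chainK_Seg k (e : rel T) u p :
  (forall x y, e x y -> step_ok G x k y) -> path e u p ->
  all (fun x => x \notin Z) (behead (belast u p)) ->
  ~~ (head_at_next k && head_at_prev k) ->
  Seg u (last u p) (chainK k u p).
Proof.
move=> He; elim: p u => [|x p IH] u /=; first by move=> _ _ _; split.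
move=> /andP[Hux Hp] Hz Hk.
have Hz' : all (fun x => x \notin Z) (behead (belast x p)).
  by case: p {Hp IH} Hz => //= x' p /andP[_ ->].
have [H1 H2 H3 H4] := IH x Hp Hz' Hk.
split.
- by rewrite /= eqxx H1.
- by rewrite /stepok /= He.
- exact: H3.
- case: p {Hp IH Hz'} H1 H2 H3 H4 Hz => [|x' p] //= _ _ _ H4 /andP[Hx _].
  by rewrite /NC Hx (negbTE Hk) /= H4.
Qed.

Lemma step_Fwd x y : edge G x y -> step_ok G x Fwd y.
Proof. by move=> He; rewrite /step_ok /= He andbT; exact: (edge_nodes wfG He). Qed.

Lemma step_Bwd x y : edge G y x -> step_ok G x Bwd y.
Proof. by move=> He; rewrite /step_ok /= He andbT andbC; exact: (edge_nodes wfG He). Qed.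

Lemma path_eW_W u p : path (eW G W) u p -> all (fun x => x \in W) p.
Proof. by elim: p u => [|x p IH] u //= /andP[/and3P[_ -> _] /IH]. Qed.

Lemma path_reW_W u p : path [rel x y | eW G W y x] u p -> all (fun x => x \in W) p.
Proof. by elim: p u => [|x p IH] u //= /andP[/and3P[-> _ _] /IH]. Qed.

Lemma all_WZ p : all (fun x => x \in W) p -> all (fun x => x \notin Z) p.
Proof. by move=> H; apply/allP => x /(allP H) Hx; exact: (WnZ ZW Hx). Qed.

Lemma UpSeg u1 a : Wreach G W u1 a -> exists pu,
  [/\ path [rel x y | edge G y x] a pu, all (fun x => x \in W) pu, last a pu = u1 & pu != [::]].
Proof.
case/WreachP => ur [Hu1 Hur Hc He].
have : connect [rel x y | eW G W y x] ur u1 by rewrite connect_rev.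
case/connectP => q Hq Eu1.
exists (ur :: q); split => //=.
- rewrite He /=; apply: sub_path Hq => x y /=; exact: eW_edge.
- by rewrite Hur (path_reW_W Hq).
Qed.

Lemma DownSeg u2 b : Wreach G W u2 b -> exists p,
  path (edge G) u2 (rcons p b) /\ all (fun x => x \in W) (u2 :: p).
Proof.
case/WreachP => ur [Hu2 Hur /connectP[p Hp Eur] He].
exists p; split.
  by rewrite rcons_path -Eur He andbT; apply: sub_path Hp => x y; exact: eW_edge.
by rewrite /= Hu2 (path_eW_W Hp).
Qed.

Lemma Seg_Fwd a p : path (edge G) a p -> all (fun x => x \notin Z) (behead (belast a p)) ->
  Seg a (last a p) (chainK Fwd a p).
Proof. by move=> H1 H2; apply: chainK_Seg H1 H2 _ => // x y; exact: step_Fwd. Qed.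

Lemma Seg_Bwd a p : path [rel x y | edge G y x] a p -> all (fun x => x \notin Z) (behead (belast a p)) ->
  Seg a (last a p) (chainK Bwd a p).
Proof. by move=> H1 H2; apply: chainK_Seg H1 H2 _ => // x y; exact: step_Bwd. Qed.

Lemma chainK_lastsb k t0 u p : sb t0 = u -> sb (last t0 (chainK k u p)) = last u p.
Proof. by elim: p t0 u => [|x p IH] t0 u //= _; apply: IH. Qed.

Lemma chainK_lastk k t0 u p : sk t0 = k -> sk (last t0 (chainK k u p)) = k.
Proof. by elim: p t0 u => [|x p IH] t0 u //= _; apply: IH. Qed.

Lemma NCj_Fwd l1 u p : (if l1 is t1 :: l1' then sb (last t1 l1') \notin Z else true) ->
  NCj l1 (chainK Fwd u p).
Proof. by case: l1 => [|t1 l1'] //=; case: p => [|x p] //= H; rewrite /NC /= andbF. Qed.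

Lemma NCj_Bwd a pu l2 : last a pu \notin Z -> NCj (chainK Bwd a pu) l2.
Proof.
case: pu => [|x pu] //= Hz; case: l2 => [|t2 l2] //=.
by rewrite /NC (chainK_lastk _ _ (t0 := St a Bwd x)) // (chainK_lastsb _ _ (t0 := St a Bwd x)).
Qed.

Lemma all_behead_belast (P : pred T) a p : all P p -> all P (behead (belast a p)).
Proof.
case: p => [|x p] // H /=; apply/allP => y /mem_belast Hy; exact: (allP H).
Qed.

Lemma Seg1 a k b : step_ok G a k b -> Seg a b [:: St a k b].
Proof. by move=> H; split => //=; rewrite ?eqxx ?andbT. Qed.

Lemma expand t : stepok M t -> exists t0 s, Seg (sa t) (sb t) (t0 :: s) /\
  [/\ head_at_prev (sk t0) = head_at_prev (sk t), okL M t -> okL G t0,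
      head_at_next (sk (last t0 s)) = head_at_next (sk t) & okR M t -> okR G (last t0 s)].
Proof.
case: t => a k b; rewrite /stepok /step_ok /= => /and3P[Ha Hb Hk].
have HaW : a \notin W by move: Ha; rewrite inE => /andP[].
have HbW : b \notin W by move: Hb; rewrite inE => /andP[].
have Han : a \in nodes G by move: Ha; rewrite inE => /andP[].
have Hbn : b \in nodes G by move: Hb; rewrite inE => /andP[].
case: k Hk => Hk.
- case/medgeP: Hk => _ _ [He|[u1 [Hau1 Hw]]].
    exists (St a Fwd b), [::]; split; first by apply: Seg1; apply: step_Fwd.
    by split => //; rewrite /okL /= (Sc_marg wfG).
  have [p [Hp HpW]] := DownSeg Hw.
  exists (St a Fwd u1), (chainK Fwd u1 (rcons p b)); split.
    have := @Seg_Fwd a (u1 :: rcons p b); rewrite /= last_rcons; apply.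
      by rewrite Hau1 Hp.
    by rewrite belast_rcons; apply: all_WZ.
  rewrite chainK_last; split => //=.
  rewrite /okL /= (Sc_marg wfG) // !ScE => /andP[Hba Hab].
  rewrite (connect_trans (Wreach_conn wfG Hw) Hba) /=.
  by apply: connect1; rewrite eN_edge.
- case/medgeP: Hk => _ _ [He|[u1 [Hbu1 Hw]]].
    exists (St a Bwd b), [::]; split; first by apply: Seg1; apply: step_Bwd.
    by split => //; rewrite /okR /= (Sc_marg wfG).
  have [pu [Hp HpW Hl Hne]] := UpSeg Hw.
  case: pu Hp HpW Hl Hne => [//|ur q] Hp HpW Hl _.
  exists (St a Bwd ur), (chainK Bwd ur (rcons q b)); split.
    have := @Seg_Bwd a (rcons (ur :: q) b); rewrite last_rcons; apply.
      by rewrite rcons_path Hp /=; move: Hl => /= ->.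
    by rewrite belast_rcons /=; apply: (all_WZ (p := ur :: q)).
  rewrite chainK_last; split => //=.
  move: Hl => /= Hl; rewrite /okR /= Hl (Sc_marg wfG) // !ScE => /andP[Hab Hba].
  rewrite (connect_trans (Wreach_conn wfG Hw) Hab) /=.
  by apply: connect1; rewrite eN_edge.
- case/andP: Hk => Hab /hypmP[F [HF HFs Ca Cb]].
  have Fin : forall l, Seg a b l ->
      (if l is t0 :: s then head_at_prev (sk t0) && head_at_next (sk (last t0 s)) else false) ->
      exists t0 s, Seg a b (t0 :: s) /\
      [/\ head_at_prev (sk t0) = head_at_prev Bi, okL M (St a Bi b) -> okL G t0,
          head_at_next (sk (last t0 s)) = head_at_next Bi & okR M (St a Bi b) -> okR G (last t0 s)].
    case => [//|t0 s] HS /andP[H1 H2]; exists t0, s; split => //; split.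
    - by case: (sk t0) H1.
    - by rewrite /okL; case: (sk t0) H1.
    - by case: (sk (last t0 s)) H2.
    - by rewrite /okR; case: (sk (last t0 s)) H2.
  have HFn : F \subset nodes G by case: wfG => _ H _ _; apply: H.
  have stepBi : forall x y, x \in F -> y \in F -> x != y -> step_ok G x Bi y.
    move=> x y Hx Hy Hxy; rewrite /step_ok /= (subsetP HFn x Hx) (subsetP HFn y Hy) Hxy /=.
    by apply: (hyp_sub wfG HF); apply/subsetP => z /set2P[->|->].
  have neqW : forall x y, x \notin W -> y \in W -> x != y.
    by move=> x y Hx Hy; apply/eqP => Exy; move: Hx; rewrite Exy Hy.
  have neqW' : forall x y, x \in W -> y \notin W -> x != y.
    by move=> x y Hx Hy; apply/eqP => Exy; move: Hy; rewrite -Exy Hx.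
  case/covP: Ca => [[HaF _]|[u1 /setIP[Hu1F Hu1W] Hw1]];
  case/covP: Cb => [[HbF _]|[u2 /setIP[Hu2F Hu2W] Hw2]].
  + by apply: (Fin [:: St a Bi b]) => //; apply: Seg1; apply: stepBi.
  + have [p [Hp HpW]] := DownSeg Hw2.
    apply: (Fin ([:: St a Bi u2] ++ chainK Fwd u2 (rcons p b))).
      apply: (Seg_cat (m := u2)); first by apply: Seg1; apply: stepBi => //; apply: neqW.
        have := @Seg_Fwd u2 (rcons p b); rewrite last_rcons; apply => //.
        by rewrite belast_rcons /=; case/andP: HpW => _ H; apply: all_WZ.
      by apply: NCj_Fwd; rewrite /= (WnZ ZW).
    by rewrite /= chainK_last.
  + have [pu [Hp HpW Hl Hne]] := UpSeg Hw1.
    have HS1 : Seg a u1 (chainK Bwd a pu).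
      by rewrite -Hl; apply: Seg_Bwd => //; apply: all_behead_belast; apply: all_WZ.
    case: pu Hp HpW Hl Hne HS1 => [//|ur q] Hp HpW Hl _ HS1.
    apply: (Fin (chainK Bwd a (ur :: q) ++ [:: St u1 Bi b])).
      apply: (Seg_cat HS1); first by apply: Seg1; apply: stepBi => //; apply: neqW'.
      by apply: NCj_Bwd; rewrite Hl (WnZ ZW).
    by rewrite /= last_cat.
  + have [pu [Hp HpW Hl Hne]] := UpSeg Hw1.
    have HS1 : Seg a u1 (chainK Bwd a pu).
      by rewrite -Hl; apply: Seg_Bwd => //; apply: all_behead_belast; apply: all_WZ.
    have [p [Hp2 HpW2]] := DownSeg Hw2.
    have HS2 : Seg u2 b (chainK Fwd u2 (rcons p b)).
      have := @Seg_Fwd u2 (rcons p b); rewrite last_rcons; apply => //.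
      by rewrite belast_rcons /=; case/andP: HpW2 => _ H; apply: all_WZ.
    case: pu Hp HpW Hl Hne HS1 => [//|ur q] Hp HpW Hl _ HS1.
    case: (eqVneq u1 u2) => [Eu|Hu].
      subst u2.
      apply: (Fin (chainK Bwd a (ur :: q) ++ chainK Fwd u1 (rcons p b))).
        apply: (Seg_cat HS1 HS2).
        by apply: NCj_Bwd; rewrite Hl (WnZ ZW).
      by rewrite /= last_cat chainK_last.
    apply: (Fin (chainK Bwd a (ur :: q) ++ ([:: St u1 Bi u2] ++ chainK Fwd u2 (rcons p b)))).
      apply: (Seg_cat HS1).
        apply: (Seg_cat (m := u2)); first by apply: Seg1; apply: stepBi.
          exact: HS2.
        by apply: NCj_Fwd; rewrite /= (WnZ ZW).
      by apply: NCj_Bwd; rewrite Hl (WnZ ZW).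
    by rewrite /= last_cat /= chainK_last.
Qed.

Lemma loc_MG a (hl okl hr okr hl' okl' hr' okr' : bool) : a \notin W ->
  loc M Z a hl okl hr okr -> hl = hl' -> hr = hr' -> (okl -> okl') -> (okr -> okr') ->
  loc G Z a hl' okl' hr' okr'.
Proof.
move=> HaW; rewrite /loc => H <- <- H1 H2; move: H; case: ifP => _.
  by rewrite (AncS_marg wfG ZW).
by move=> /implyP H; apply/implyP => /H /andP[/H1 -> /H2 ->].
Qed.

Lemma D1 ms : forall a (hl okl hlG oklG : bool), a \notin W -> chained a ms ->
  all (stepok M) ms -> openfrom M Z a hl okl ms -> hl = hlG -> (okl -> oklG) ->
  exists gs, [/\ chained a gs, all (stepok G) gs, lastn a gs = lastn a ms &
                 openfrom G Z a hlG oklG gs].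
Proof.
elim: ms => [|t ms IH] a hl okl hlG oklG HaW.
  by move=> *; exists [::].
move=> /andP[/eqP Hta Hch] /andP[Hst Hall]; rewrite openfrom_cons => /andP[Hloc Hop] Ehl Hok.
have [t0 [s [[H1 H2 H3 H4] [K1 K2 K3 K4]]]] := expand Hst.
have HbW : sb t \notin W.
  by move: (Hst) => /and3P[_ + _]; rewrite /= inE => /andP[].
have [gs' [G1 G2 G3 G4]] :=
  IH (sb t) _ _ (head_at_next (sk (last t0 s))) (okR G (last t0 s)) HbW Hch Hall Hop (esym K3) K4.
move: H1 H2 H3 H4; rewrite /= => /andP[/eqP Ht0 Hch0] /andP[Hs0 Hs] Hl0' Hp0.
have Hl0 : lastn (sb t0) s = sb t by exact: Hl0'.
exists (t0 :: s ++ gs'); split.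
- by rewrite /= Ht0 Hta eqxx chained_cat Hch0 Hl0.
- by rewrite /= Hs0 all_cat Hs.
- by rewrite /lastn /= -/(lastn _ _) lastn_cat Hl0 G3.
- have HJ : path (J G Z) t0 s by apply: sub_path Hp0 => x y; apply: NC_J.
  have Hsl : sb (last t0 s) = sb t by rewrite -lastn_last.
  rewrite /= cat_path HJ path_openfrom Hsl G4 andbT.
  by rewrite andbT; exact: (loc_MG HaW Hloc Ehl (esym K1) Hok K2).
Qed.

End Dir1.


Lemma falseI (P : Prop) : false -> P.
Proof. by []. Qed.

Unset Implicit Arguments.

Theorem mainTheorem6 (T : finType) (G : hedg T) (W X Y Z : {set T}) :
  hedg_wf G ->
  W \subset nodes G -> X \subset nodes G -> Y \subset nodes G -> Z \subset nodes G ->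
  (X :|: Y :|: Z) :&: W = set0 ->
  (sigma_sep G X Y Z <-> sigma_sep (marg G W) X Y Z).
Proof.
move=> wfG WN XN YN ZN Hdis.
have nW : forall x, x \in X :|: Y :|: Z -> x \notin W.
  move=> x Hx; apply/negP => HxW.
  have : x \in (X :|: Y :|: Z) :&: W by rewrite inE Hx HxW.
  by rewrite Hdis inE.
have ZW : forall z, z \in Z -> z \notin W.
  by move=> z Hz; apply: nW; rewrite !inE Hz !orbT.
have endW : forall v0 w, ((v0 \in X) && (w \in Y)) || ((v0 \in Y) && (w \in X)) ->
    v0 \notin W /\ w \notin W.
  move=> v0 w /orP[/andP[H1 H2]|/andP[H1 H2]]; split; apply: nW; by rewrite !inE ?H1 ?H2 ?orbT.
split.
- move=> HG v0 s Hw Hxy; rewrite blockedE; apply/negP => /and3P[Hv0 Hy Hop].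
  have [Hv0W HyW] := endW _ _ Hxy.
  move: Hw; rewrite walk_okE => /andP[Hv0n Hall].
  have [gs [G1 G2 G3 G4]] := D1 wfG ZW Hv0W (chained_to v0 s) Hall Hop (erefl false) id.
  have := HG v0 (fromsteps gs).
  rewrite walk_okE tosteps_from // G2 andbT blockedE plastE tosteps_from // G3 -plastE.
  move: Hv0n; rewrite /= inE => /andP[_ ->] /(_ isT Hxy).
  by rewrite Hv0 Hy G4.
- move=> HM v0 s Hw Hxy; rewrite blockedE; apply/negP => /and3P[Hv0 Hy Hop].
  have [Hv0W HyW] := endW _ _ Hxy.
  move: Hw; rewrite walk_okE => /andP[Hv0n Hall].
  have [HA _ _ _] := main2 wfG WN ZW HyW Hy (tosteps v0 s).
  have HGr : Gr G (plast v0 s) v0 (tosteps v0 s).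
    by rewrite /Gr chained_to Hall plastE eqxx.
  have Hv0N : v0 \in nodes G :\: W by rewrite inE Hv0W Hv0n.
  have [ms [M1 M2 M3 M4]] := HA v0 false true false true Hv0N HGr Hop (@falseI _) (fun _ h => h) (@falseI _).
  have := HM v0 (fromsteps ms).
  rewrite walk_okE tosteps_from // M2 andbT blockedE plastE tosteps_from // M3.
  rewrite /= Hv0N => /(_ isT Hxy).
  by rewrite Hv0 Hy M4.
Qed.
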